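(* Let $0<\alpha<1/2$ and let $A_I=\{(x,y)\in[0,1]^2: S(x,y)\ge 2\alpha^2\}$. For every $(x,y)\in[0,1]^2\setminus\{(0,0)\}$ there exists $N\ge 0$ such that $G_\alpha^n(x,y)\in A_I$ for all $n\ge N$. Consequently every $G_\alpha$-invariant Borel probability measure $\mu$ on $[0,1]^2$ with $\mu(\{(0,0)\})=0$ satisfies $\mu(A_I)=1$.
   Context: Let $\tau:[0,1]\to[0,1]$ be the symmetric tent map, $\tau(x)=2x$ for $0\le x<1/2$ and $\tau(x)=2-2x$ for $1/2\le x\le 1$. For $0<\alpha<1$ define $G_\alpha:[0,1]^2\to[0,1]^2$ by $G_\alpha(x,y)=(y,\tau(\alpha y+(1-\alpha)x))$. Let $S(x,y)=\alpha y+(1-\alpha)x$. *)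

(* Defs.v *)
From Stdlib Require Import Reals Lra.
Open Scope R_scope.

Definition tau (x : R) : R := if Rlt_dec x (1/2) then 2 * x else 2 - 2 * x.

Definition S (alpha : R) (p : R * R) : R := alpha * snd p + (1 - alpha) * fst p.

Definition G (alpha : R) (p : R * R) : R * R := (snd p, tau (S alpha p)).

Definition square (p : R * R) : Prop :=
  0 <= fst p <= 1 /\ 0 <= snd p <= 1.

Definition A_I (alpha : R) (p : R * R) : Prop :=
  square p /\ S alpha p >= 2 * alpha ^ 2.

(* open subsets of R^2 (product / max-norm topology = Euclidean topology) *)
Definition open2 (U : R * R -> Prop) : Prop :=
  forall p, U p -> exists eps, 0 < eps /\
    forall q, Rabs (fst q - fst p) < eps -> Rabs (snd q - snd p) < eps -> U q.

Inductive borel : (R * R -> Prop) -> Prop :=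
| borel_open : forall U, open2 U -> borel U
| borel_compl : forall B, borel B -> borel (fun p => ~ B p)
| borel_union : forall F : nat -> (R * R -> Prop),
    (forall n, borel (F n)) -> borel (fun p => exists n, F n p).

(* A Borel probability measure on [0,1]^2, represented as a Borel probability
   measure on R^2 giving full mass to [0,1]^2 (values on non-Borel sets are
   irrelevant). *)
Record borel_prob_on_square (mu : (R * R -> Prop) -> R) : Prop := {
  bp_nonneg : forall B, borel B -> 0 <= mu B;
  bp_sigma_additive : forall F : nat -> (R * R -> Prop),
    (forall n, borel (F n)) ->
    (forall m n p, m <> n -> F m p -> F n p -> False) ->
    infinite_sum (fun n => mu (F n)) (mu (fun p => exists n, F n p));
  bp_total : mu (fun _ => True) = 1;
  bp_square : mu square = 1
}.

(* G_alpha-invariance: mu (G_alpha^{-1} B) = mu B for Borel B, the preimage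
   being taken inside [0,1]^2 *)
Definition G_invariant (alpha : R) (mu : (R * R -> Prop) -> R) : Prop :=
  forall B, borel B -> mu (fun p => square p /\ B (G alpha p)) = mu B.

(* Main.v *)
Require Import Defs.
From Stdlib Require Import Reals.
From Stdlib Require Import Lra Psatz Classical FunctionalExtensionality PropExtensionality.
Open Scope R_scope.

Lemma set_eq (A B : R*R -> Prop) : (forall p, A p <-> B p) -> A = B.
Proof. intros H; apply functional_extensionality; intro p; apply propositional_extensionality; auto. Qed.

Lemma borel_ext A B : borel A -> (forall p, A p <-> B p) -> borel B.
Proof. intros HA H; replace B with A; auto; apply set_eq; auto. Qed.

Lemma borel_or A B : borel A -> borel B -> borel (fun p => A p \/ B p).
Proof.
  intros HA HB.
  apply borel_ext with (fun p => exists n:nat, (match n with O => A | _ => B end) p).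
  - apply borel_union; intros [|n]; auto.
  - intros p; split.
    + intros [[|n] H]; auto.
    + intros [H|H]; [exists 0%nat | exists 1%nat]; auto.
Qed.

Lemma borel_and A B : borel A -> borel B -> borel (fun p => A p /\ B p).
Proof.
  intros HA HB.
  apply borel_ext with (fun p => ~ (fun q => (fun r => ~ A r) q \/ (fun r => ~ B r) q) p).
  - apply borel_compl, borel_or; apply borel_compl; auto.
  - intros p; simpl; split.
    + intros H; destruct (classic (A p)), (classic (B p)); tauto.
    + tauto.
Qed.

Lemma open_pos : open2 (fun p => 0 < fst p).
Proof.
  intros p Hp; exists (fst p); split; auto.
  intros q H1 _; unfold Rabs in H1; destruct Rcase_abs in H1; lra.
Qed.

Lemma lin_bound a b dx dy d : Rabs dx < d -> Rabs dy < d ->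
  Rabs (a*dx + b*dy) <= (Rabs a + Rabs b) * d.
Proof.
  intros H1 H2. eapply Rle_trans; [apply Rabs_triang|].
  rewrite !Rabs_mult.
  pose proof (Rabs_pos a); pose proof (Rabs_pos b). nra.
Qed.

Lemma borel_affine B : borel B -> forall a1 b1 c1 a2 b2 c2 (T : R*R -> R*R),
  (forall p, T p = (a1*fst p + b1*snd p + c1, a2*fst p + b2*snd p + c2)) ->
  borel (fun p => B (T p)).
Proof.
  intros HB a1 b1 c1 a2 b2 c2 T HT.
  induction HB as [U HU | B HB IH | F HF IH].
  - apply borel_open. intros p Hp.
    destruct (HU _ Hp) as [eps [Heps Hq]].
    set (M := Rabs a1 + Rabs b1 + Rabs a2 + Rabs b2 + 1).
    assert (HM : 0 < M) by (unfold M; pose proof (Rabs_pos a1); pose proof (Rabs_pos b1);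
       pose proof (Rabs_pos a2); pose proof (Rabs_pos b2); lra).
    exists (eps / M); split.
    + apply Rdiv_lt_0_compat; auto.
    + intros q H1 H2. apply Hq; rewrite !HT; simpl.
      * replace (a1 * fst q + b1 * snd q + c1 - (a1 * fst p + b1 * snd p + c1))
          with (a1 * (fst q - fst p) + b1 * (snd q - snd p)) by ring.
        eapply Rle_lt_trans; [apply lin_bound; eauto|].
        assert (eps = M * (eps / M)) by (field; lra).
        assert (0 < eps / M) by (apply Rdiv_lt_0_compat; auto).
        unfold M in *. pose proof (Rabs_pos a2); pose proof (Rabs_pos b2). nra.
      * replace (a2 * fst q + b2 * snd q + c2 - (a2 * fst p + b2 * snd p + c2))
          with (a2 * (fst q - fst p) + b2 * (snd q - snd p)) by ring.
        eapply Rle_lt_trans; [apply lin_bound; eauto|].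
        assert (eps = M * (eps / M)) by (field; lra).
        assert (0 < eps / M) by (apply Rdiv_lt_0_compat; auto).
        unfold M in *. pose proof (Rabs_pos a1); pose proof (Rabs_pos b1). nra.
  - apply borel_compl; auto.
  - apply (borel_union (fun n p => F n (T p))); auto.
Qed.

Lemma borel_lt a b c : borel (fun p => 0 < a*fst p + b*snd p + c).
Proof.
  pose proof (borel_affine _ (borel_open _ open_pos) a b c 0 0 0
     (fun p => (a*fst p+b*snd p+c, 0*fst p + 0*snd p + 0)) (fun p => eq_refl)) as H.
  eapply borel_ext; [exact H|]. intros p; simpl; tauto.
Qed.

Lemma borel_le a b c : borel (fun p => 0 <= a*fst p + b*snd p + c).
Proof.
  eapply borel_ext; [apply borel_compl, (borel_lt (-a) (-b) (-c))|].
  intros p; simpl; split; intros; lra.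
Qed.

Lemma tau_lt s : s < 1/2 -> tau s = 2*s.
Proof. unfold tau; destruct (Rlt_dec s (1/2)); lra. Qed.
Lemma tau_ge s : s >= 1/2 -> tau s = 2 - 2*s.
Proof. unfold tau; destruct (Rlt_dec s (1/2)); lra. Qed.

Definition Vf (p : R*R) := fst p + snd p.
Definition K alpha p := square p /\ S alpha p >= 2*alpha^2 /\
  (2*alpha*S alpha p + (1-alpha)*snd p >= 2*alpha^2 \/ S alpha p >= 1/2).

Section Dyn.
Variable alpha : R.
Hypothesis Ha : 0 < alpha < 1/2.

Lemma G_square p : square p -> square (G alpha p).
Proof.
  destruct p as [x y]; unfold square, G, S; simpl; intros [Hx Hy].
  split; [lra|].
  assert (0 <= alpha*y + (1-alpha)*x <= 1) by nra.
  destruct (Rlt_dec (alpha*y + (1-alpha)*x) (1/2)).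
  - rewrite tau_lt; lra.
  - rewrite tau_ge; lra.
Qed.

Lemma half_K p : square p -> S alpha p >= 1/2 -> K alpha (G alpha p).
Proof.
  intros Hsq Hs. pose proof (G_square p Hsq) as HG.
  destruct p as [x y]; unfold K, G, square in *; simpl in *.
  rewrite tau_ge by auto. unfold S in *; simpl in *. idtac.
  destruct Hsq as [Hx Hy].
  split; [rewrite tau_ge in HG by auto; exact HG|].
  assert (Q1 : 0 <= alpha*((1-alpha)*(1-x))) by (repeat apply Rmult_le_pos; try apply pow_le; nra).
  assert (Q2 : 0 <= y*((1-2*alpha)*(1+alpha))) by (repeat apply Rmult_le_pos; try apply pow_le; nra).
  assert (Q3 : 0 <= alpha^3*(1-y)) by (repeat apply Rmult_le_pos; try apply pow_le; nra).
  assert (Q4 : 0 <= (1-alpha)*(1-x)*(2*alpha^2+1-alpha)) by (repeat apply Rmult_le_pos; try apply pow_le; nra).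
  assert (Q5 : 0 <= alpha*(1-2*alpha)) by (repeat apply Rmult_le_pos; try apply pow_le; nra).
  split; [nra|left; nra].
Qed.

Lemma K_inv p : K alpha p -> K alpha (G alpha p).
Proof.
  intros HK. destruct (Rlt_dec (S alpha p) (1/2)) as [Hs|Hs]; [|apply half_K; [apply HK|lra]].
  pose proof (G_square p (proj1 HK)) as HG.
  destruct HK as [Hsq [HS [HD|HD]]]; [|lra].
  destruct p as [x y]; unfold K, G, square in *; simpl in *.
  rewrite tau_lt by auto. unfold S in *; simpl in *.
  split; [rewrite tau_lt in HG by auto; exact HG|]. split; [nra|left; nra].
Qed.

Lemma K_AI p : K alpha p -> A_I alpha p.
Proof. intros [H1 [H2 _]]; split; auto. Qed.

Lemma K_not0 : ~ K alpha (0,0).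
Proof. intros [_ [H _]]; unfold S in H; simpl in H; nra. Qed.

Definition mu0 := 1 + 2*alpha*(1-2*alpha).

Lemma grow p : square p -> S alpha p < 1/2 -> Vf (G alpha p) >= mu0 * Vf p.
Proof.
  destruct p as [x y]; unfold square, Vf, G, mu0; simpl; intros [Hx Hy] Hs.
  rewrite tau_lt by auto. unfold S in *; simpl in *.
  assert (0 <= alpha*alpha*y) by (repeat apply Rmult_le_pos; lra).
  assert (0 <= (1-2*alpha)*(1-2*alpha)*x) by (repeat apply Rmult_le_pos; lra).
  nra.
Qed.

Definition r0 := / mu0.
Lemma mu0_gt1 : 1 < mu0.
Proof. unfold mu0; nra. Qed.
Lemma r0_bounds : 0 < r0 < 1.
Proof. pose proof mu0_gt1. unfold r0; split.
  - apply Rinv_0_lt_compat; lra.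
  - rewrite <- Rinv_1; apply Rinv_lt_contravar; lra. Qed.
Lemma r0_mu0 : r0 * mu0 = 1.
Proof. pose proof mu0_gt1; unfold r0; field; lra. Qed.

Lemma pow_small (v : R) : 0 < v -> exists n, 2 * r0^n < v.
Proof.
  intros Hv. pose proof r0_bounds.
  destruct (pow_lt_1_zero r0 ltac:(rewrite Rabs_right; lra) (v/2) ltac:(lra)) as [N HN].
  exists N. specialize (HN N (le_n N)).
  pose proof (Rle_abs (r0^N)). lra.
Qed.

Lemma iter_square n p : square p -> square (Nat.iter n (G alpha) p).
Proof. intros H; induction n; simpl; auto. apply G_square; auto. Qed.

Lemma Vf_le2 p : square p -> Vf p <= 2.
Proof. destruct p; unfold square, Vf; simpl; lra. Qed.

Lemma exists_half p : square p -> p <> (0,0) ->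
  exists n, S alpha (Nat.iter n (G alpha) p) >= 1/2.
Proof.
  intros Hsq Hne. apply NNPP; intro Hno.
  assert (Hall : forall n, S alpha (Nat.iter n (G alpha) p) < 1/2).
  { intros n. apply Rnot_ge_lt. intro H; apply Hno; eauto. }
  assert (Hb : forall n, Vf p <= r0^n * Vf (Nat.iter n (G alpha) p)).
  { induction n; simpl. lra.
    pose proof (grow _ (iter_square n p Hsq) (Hall n)).
    pose proof r0_bounds. pose proof r0_mu0.
    assert (0 <= r0^n) by (apply pow_le; lra).
    assert (r0 * mu0 * Vf (Nat.iter n (G alpha) p) <= r0 * Vf (G alpha (Nat.iter n (G alpha) p))) by nra.
    rewrite r0_mu0, Rmult_1_l in H3.
    apply Rle_trans with (1 := IHn).
    replace (r0 * r0 ^ n * Vf (G alpha (Nat.iter n (G alpha) p))) with (r0 ^ n * (r0 * Vf (G alpha (Nat.iter n (G alpha) p)))) by ring.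
    apply Rmult_le_compat_l; auto. }
  assert (Hv : 0 < Vf p).
  { destruct p as [x y]; unfold square, Vf in *; simpl in *.
    destruct (Req_dec x 0); destruct (Req_dec y 0); subst; try lra; congruence. }
  destruct (pow_small _ Hv) as [n Hn].
  specialize (Hb n). pose proof (Vf_le2 _ (iter_square n p Hsq)).
  pose proof r0_bounds. assert (0 <= r0^n) by (apply pow_le; lra). nra.
Qed.

Lemma part1 p : square p -> p <> (0,0) ->
  exists N, forall n, (N <= n)%nat -> A_I alpha (Nat.iter n (G alpha) p).
Proof.
  intros Hsq Hne. destruct (exists_half p Hsq Hne) as [n Hn].
  exists (Datatypes.S n). intros m Hm.
  assert (Hk : forall k, K alpha (Nat.iter (k + Datatypes.S n) (G alpha) p)).
  { induction k; simpl.
    - apply half_K; auto. apply iter_square; auto.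
    - apply K_inv; auto. }
  replace m with ((m - Datatypes.S n) + Datatypes.S n)%nat by lia.
  apply K_AI, Hk.
Qed.
End Dyn.

Section Meas.
Variable mu : (R * R -> Prop) -> R.
Hypothesis Hmu : borel_prob_on_square mu.

Lemma borel_empty : borel (fun _ => False).
Proof. eapply borel_ext; [apply (borel_lt 0 0 0)|]. intros p; split; intros; lra. Qed.

Lemma mu_ext A B : (forall p, A p <-> B p) -> mu A = mu B.
Proof. intros H; rewrite (set_eq A B H); auto. Qed.

Lemma mu_empty : mu (fun _ => False) = 0.
Proof.
  pose proof (bp_sigma_additive _ Hmu (fun _ _ => False) (fun _ => borel_empty)
     (fun m n p _ H _ => H)) as Hs. cbv beta in Hs.
  rewrite (mu_ext (fun p => exists n : nat, False) (fun _ => False)) in Hs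
    by (intros p; split; [intros [_ []] | intros []]).
  set (c := mu (fun _ => False)) in *.
  assert (Hc : 0 <= c) by (apply (bp_nonneg _ Hmu); apply borel_empty).
  destruct (Req_dec c 0) as [|Hne]; auto.
  destruct (Hs c ltac:(lra)) as [N HN].
  specialize (HN (Datatypes.S N) ltac:(lia)).
  rewrite sum_cte in HN. unfold Rdist in HN.
  rewrite !S_INR in HN. pose proof (pos_INR N).
  rewrite Rabs_right in HN by nra. nra.
Qed.

Lemma mu_add2 A B : borel A -> borel B -> (forall p, A p -> B p -> False) ->
  mu (fun p => A p \/ B p) = mu A + mu B.
Proof.
  intros HA HB Hd.
  set (F := fun n : nat => match n with O => A | 1%nat => B | _ => fun _ : R*R => False end).
  assert (HF : forall n, borel (F n)) by (intros [|[|n]]; simpl; auto using borel_empty).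
  assert (HFd : forall m n p, m <> n -> F m p -> F n p -> False).
  { intros [|[|m]] [|[|n]] p Hmn; simpl; try tauto; try lia; eauto. }
  pose proof (bp_sigma_additive _ Hmu F HF HFd) as Hs. cbv beta in Hs.
  rewrite (mu_ext (fun p => exists n, F n p) (fun p => A p \/ B p)) in Hs.
  2:{ intros p; split.
      - intros [[|[|n]] H]; simpl in H; tauto.
      - intros [H|H]; [exists 0%nat | exists 1%nat]; auto. }
  apply (uniqueness_sum _ _ _ Hs).
  assert (Hsum : forall n, sum_f_R0 (fun n => mu (F n)) (Datatypes.S n) = mu A + mu B).
  { induction n.
    - simpl. auto.
    - simpl in *. rewrite IHn. rewrite mu_empty. ring. }
  intros eps Heps. exists 1%nat. intros n Hn.
  destruct n as [|n]; [lia|]. rewrite Hsum. unfold Rdist.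
  replace (mu A + mu B - (mu A + mu B)) with 0 by ring. rewrite Rabs_R0; auto.
Qed.

Lemma mu_mono A B : borel A -> borel B -> (forall p, A p -> B p) -> mu A <= mu B.
Proof.
  intros HA HB H.
  rewrite (mu_ext B (fun p => A p \/ (fun q => B q /\ ~ A q) p)).
  - rewrite mu_add2; auto.
    + pose proof (bp_nonneg _ Hmu (fun q => B q /\ ~ A q)
        (borel_and _ _ HB (borel_compl _ HA))). lra.
    + apply borel_and; auto. apply borel_compl; auto.
    + simpl; tauto.
  - intros p; simpl; split.
    + intros Hb; destruct (classic (A p)); tauto.
    + intros [Ha|[Hb _]]; auto.
Qed.

Lemma sum_zero : infinite_sum (fun _ => 0) 0.
Proof.
  intros eps Heps; exists 0%nat; intros n _. rewrite sum_cte. unfold Rdist.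
  replace (0 * INR (Datatypes.S n) - 0) with 0 by ring. rewrite Rabs_R0; auto.
Qed.

End Meas.

Definition W alpha a p := square p /\ ~ K alpha p /\ 0 < Vf p /\ Vf p <= a.

Section Main.
Variable alpha : R.
Hypothesis Ha : 0 < alpha < 1/2.

Lemma borel_square : borel square.
Proof.
  eapply borel_ext.
  - apply borel_and; [apply borel_and|apply borel_and];
    [apply (borel_le 1 0 0)|apply (borel_le (-1) 0 1)|apply (borel_le 0 1 0)|apply (borel_le 0 (-1) 1)].
  - intros [x y]; unfold square; simpl; split; intros; lra.
Qed.

Lemma borel_AI : borel (A_I alpha).
Proof.
  eapply borel_ext.
  - apply borel_and; [apply borel_square | apply (borel_le (1-alpha) alpha (-(2*alpha^2)))].
  - intros [x y]; unfold A_I, S; simpl; split; intros [H1 H2]; split; auto; lra.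
Qed.

Lemma borel_K : borel (K alpha).
Proof.
  eapply borel_ext.
  - apply borel_and; [apply borel_AI|apply borel_or];
    [apply (borel_le (2*alpha*(1-alpha)) (2*alpha^2 + 1 - alpha) (-(2*alpha^2)))
    |apply (borel_le (1-alpha) alpha (-(1/2)))].
  - intros [x y]; unfold A_I, K, S; simpl; split.
    + intros [[H1 H2] H3]; split; [auto|split; [lra|destruct H3; [left|right]; lra]].
    + intros [H1 [H2 H3]]; split; [split; [auto|lra]|destruct H3; [left|right]; lra].
Qed.

Lemma borel_zero : borel (fun p => p = (0,0)).
Proof.
  eapply borel_ext.
  - apply borel_and; [apply borel_and|apply borel_and];
    [apply (borel_le 1 0 0)|apply (borel_le (-1) 0 0)|apply (borel_le 0 1 0)|apply (borel_le 0 (-1) 0)].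
  - intros [x y]; simpl; split.
    + intros [[H1 H2] [H3 H4]]; f_equal; lra.
    + intros H; inversion H; subst; lra.
Qed.

Lemma borel_W a : borel (W alpha a).
Proof.
  unfold W. apply borel_and; [apply borel_square|].
  apply borel_and; [apply borel_compl, borel_K|].
  apply borel_and.
  - eapply borel_ext; [apply (borel_lt 1 1 0)|]. intros [x y]; unfold Vf; simpl; split; intros; lra.
  - eapply borel_ext; [apply (borel_le (-1) (-1) a)|]. intros [x y]; unfold Vf; simpl; split; intros; lra.
Qed.

Lemma borel_pre a : borel (fun p => square p /\ W alpha a (G alpha p)).
Proof.
  set (T1 := fun p : R*R => (snd p, 2 * S alpha p)).
  set (T2 := fun p : R*R => (snd p, 2 - 2 * S alpha p)).
  assert (B1 : borel (fun p => W alpha a (T1 p))).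
  { apply (borel_affine _ (borel_W a) 0 1 0 (2*(1-alpha)) (2*alpha) 0).
    intros [x y]; unfold T1, S; simpl; f_equal; ring. }
  assert (B2 : borel (fun p => W alpha a (T2 p))).
  { apply (borel_affine _ (borel_W a) 0 1 0 (-(2*(1-alpha))) (-(2*alpha)) 2).
    intros [x y]; unfold T2, S; simpl; f_equal; ring. }
  eapply borel_ext.
  - apply borel_or; (apply borel_and; [apply borel_and; [apply borel_square|]|]).
    + apply (borel_lt (-(1-alpha)) (-alpha) (1/2)).
    + exact B1.
    + apply (borel_le (1-alpha) alpha (-(1/2))).
    + exact B2.
  - intros [x y]; simpl.
    destruct (Rlt_dec (S alpha (x,y)) (1/2)) as [Hs|Hs].
    + assert (HG : G alpha (x,y) = T1 (x,y)) by (unfold G, T1; rewrite tau_lt; auto).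
      rewrite HG. unfold S in Hs; simpl in Hs. split.
      * intros [[[H1 H2] H3]|[[H1 H2] H3]]; [tauto|lra].
      * intros [H1 H2]; left; split; [split; [auto|lra]|auto].
    + assert (HG : G alpha (x,y) = T2 (x,y)) by (unfold G, T2; rewrite tau_ge; auto; lra).
      rewrite HG. unfold S in Hs; simpl in Hs. split.
      * intros [[[H1 H2] H3]|[[H1 H2] H3]]; [lra|tauto].
      * intros [H1 H2]; right; split; [split; [auto|lra]|auto].
Qed.

Lemma W_pre a p : square p -> W alpha a (G alpha p) -> W alpha (a * r0 alpha) p.
Proof.
  intros Hsq [HGsq [HnK [HV Ha']]].
  assert (Hs : S alpha p < 1/2).
  { apply Rnot_ge_lt; intro H; apply HnK; apply half_K; auto. }
  split; auto. split.
  { intro HK; apply HnK, K_inv; auto. }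
  pose proof (grow alpha Ha p Hsq Hs) as Hg.
  pose proof (r0_bounds alpha Ha). pose proof (r0_mu0 alpha Ha).
  split.
  - destruct p as [x y]; unfold square, Vf in *; simpl in *.
    destruct (Req_dec (x+y) 0); [|lra].
    assert (x = 0) by lra; assert (y = 0) by lra; subst.
    unfold G, S in HV; simpl in HV. rewrite tau_lt in HV; lra.
  - assert (Vf p = r0 alpha * mu0 alpha * Vf p) by (rewrite H0; ring).
    nra.
Qed.

Lemma r0_le1 : r0 alpha <= 1.
Proof. pose proof (r0_bounds alpha Ha); lra. Qed.

Lemma mu_W_eq mu (Hmu : borel_prob_on_square mu) (Hinv : G_invariant alpha mu) a :
  0 < a -> mu (W alpha a) = mu (W alpha (a * r0 alpha)).
Proof.
  intros Hpos. pose proof (r0_bounds alpha Ha).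
  apply Rle_antisym.
  - rewrite <- (Hinv _ (borel_W a)).
    apply mu_mono; auto using borel_pre, borel_W.
    intros p [Hsq HW]; apply W_pre; auto.
  - apply mu_mono; auto using borel_W.
    intros p [H1 [H2 [H3 H4]]]; split; [auto|split; [auto|split; [auto|nra]]].
Qed.

Lemma shell_zero mu (Hmu : borel_prob_on_square mu) (Hinv : G_invariant alpha mu) a :
  0 < a -> mu (fun p => W alpha a p /\ a * r0 alpha < Vf p) = 0.
Proof.
  intros Hpos.
  assert (Bs : borel (fun p => a * r0 alpha < Vf p)).
  { eapply borel_ext; [apply (borel_lt 1 1 (-(a * r0 alpha)))|].
    intros [x y]; unfold Vf; simpl; split; intros; lra. }
  pose proof (mu_W_eq mu Hmu Hinv a Hpos) as E.
  rewrite (mu_ext mu (W alpha a) (fun p => W alpha (a * r0 alpha) p \/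
      (fun q => W alpha a q /\ a * r0 alpha < Vf q) p)) in E.
  - rewrite mu_add2 in E; auto using borel_W, borel_and.
    + lra.
    + intros p [_ [_ [_ H1]]] [_ H2]; lra.
  - pose proof (r0_bounds alpha Ha).
    intros p; simpl; split.
    + intros HW. destruct (Rle_lt_dec (Vf p) (a * r0 alpha)); [left|right; auto].
      destruct HW as [? [? [? ?]]]; split; [auto|split; [auto|split; auto]].
    + intros [[H1 [H2 [H3 H4]]]|[HW _]]; auto. split; [auto|split; [auto|split; [auto|nra]]].
Qed.

Lemma pow_decr (r : R) : 0 <= r <= 1 -> forall k n, r ^ (k + n) <= r ^ n.
Proof.
  intros Hr k n; induction k; simpl; [lra|].
  assert (0 <= r ^ (k + n)) by (apply pow_le; lra). nra.
Qed.

Lemma W2_zero mu (Hmu : borel_prob_on_square mu) (Hinv : G_invariant alpha mu) :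
  mu (W alpha 2) = 0.
Proof.
  pose proof (r0_bounds alpha Ha) as Hr.
  set (r := r0 alpha) in *.
  set (F := fun n p => W alpha (2 * r ^ n) p /\ 2 * r ^ n * r < Vf p).
  assert (HF : forall n, borel (F n)).
  { intros n; unfold F; apply borel_and; [apply borel_W|].
    eapply borel_ext; [apply (borel_lt 1 1 (-(2 * r ^ n * r)))|].
    intros [x y]; unfold Vf; simpl; split; intros; lra. }
  assert (HFd : forall m n p, m <> n -> F m p -> F n p -> False).
  { intros m n p Hmn.
    assert (Hgen : forall m n, (m < n)%nat -> F m p -> F n p -> False).
    { intros m' n' Hlt [_ H1] [[_ [_ [_ H2]]] _].
      pose proof (pow_decr r ltac:(lra) (n' - Datatypes.S m') (Datatypes.S m')) as Hd.
      replace (n' - Datatypes.S m' + Datatypes.S m')%nat with n' in Hd by lia.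
      simpl in Hd. nra. }
    destruct (Nat.lt_gt_cases m n) as [[H|H] _]; auto.
    - intros; eauto.
    - intros; eauto. }
  pose proof (bp_sigma_additive _ Hmu F HF HFd) as Hs. cbv beta in Hs.
  assert (Hz : (fun n => mu (F n)) = (fun _ => 0)).
  { apply functional_extensionality; intro n. unfold F.
    rewrite (shell_zero mu Hmu Hinv); auto.
    assert (0 < r ^ n) by (apply pow_lt; lra). lra. }
  rewrite Hz in Hs.
  rewrite (mu_ext mu (fun p => exists n, F n p) (W alpha 2)) in Hs.
  - symmetry; apply (uniqueness_sum _ _ _ sum_zero Hs).
  - intros p; split.
    + intros [n [[H1 [H2 [H3 H4]]] _]]; split; [auto|split; [auto|split; [auto|]]].
      pose proof (pow_decr r ltac:(lra) n 0). simpl in H. rewrite Nat.add_0_r in H. lra.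
    + intros [H1 [H2 [H3 H4]]].
      assert (Hdesc : forall n, 2 * r ^ n * r < Vf p -> exists m, F m p).
      { induction n as [|n IH]; intros Hn.
        - exists 0%nat; unfold F; simpl; split; [split; [auto|split; [auto|split; [auto|lra]]]|lra].
        - destruct (Rlt_dec (2 * r ^ n * r) (Vf p)) as [Hl|Hl]; auto.
          apply Rnot_lt_le in Hl.
          simpl in Hn. assert (E : 2 * (r * r ^ n) = 2 * r ^ n * r) by ring.
          exists (Datatypes.S n); unfold F; simpl; rewrite E; split; [split; [auto|split; [auto|split; [auto|lra]]]|].
          rewrite <- E; lra. }
      destruct (pow_small alpha Ha (Vf p) H3) as [n Hn].
      apply (Hdesc n). fold r in Hn.
      assert (0 <= r ^ n) by (apply pow_le; lra). nra.
Qed.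

Lemma part2 mu (Hmu : borel_prob_on_square mu) (Hinv : G_invariant alpha mu)
  (H0 : mu (fun p => p = (0, 0)) = 0) : mu (A_I alpha) = 1.
Proof.
  pose proof (W2_zero mu Hmu Hinv) as HW.
  assert (HK : mu (K alpha) = 1).
  { rewrite <- (bp_square _ Hmu).
    rewrite (mu_ext mu square (fun p => K alpha p \/ (fun q => W alpha 2 q \/ q = (0,0)) p)).
    - rewrite mu_add2; auto using borel_K, borel_or, borel_W, borel_zero.
      + rewrite mu_add2; auto using borel_W, borel_zero.
        * lra.
        * intros p [_ [_ [H _]]] ->; unfold Vf in H; simpl in H; lra.
      + intros p HKp [[_ [Hn _]]| ->]; auto. apply K_not0 in HKp; auto.
    - intros p; simpl; split.
      + intros Hsq. destruct (classic (K alpha p)) as [|HnK]; [left; auto|right].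
        destruct (classic (p = (0,0))) as [|Hne]; [right; auto|left].
        split; [auto|split; [auto|split; [|apply Vf_le2; auto]]].
        destruct p as [x y]; unfold square, Vf in *; simpl in *.
        destruct (Req_dec (x+y) 0); [|lra].
        exfalso; apply Hne; f_equal; lra.
      + intros [[Hs _]|[[Hs _]| ->]]; auto. unfold square; simpl; lra. }
  apply Rle_antisym.
  - pose proof (bp_total _ Hmu) as Ht.
    rewrite (mu_ext mu (fun _ => True) (fun p => A_I alpha p \/ (fun q => ~ A_I alpha q) p)) in Ht.
    + rewrite mu_add2 in Ht; auto using borel_AI, borel_compl.
      pose proof (bp_nonneg _ Hmu _ (borel_compl _ borel_AI)). lra.
    + intros p; simpl; split; auto. intros _; apply classic.
  - rewrite <- HK. apply mu_mono; auto using borel_K, borel_AI. apply K_AI; auto.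
Qed.
End Main.

Theorem proposition5 (alpha : R) (Ha : 0 < alpha < 1/2) :
  (forall p : R * R, square p -> p <> (0, 0) ->
     exists N : nat, forall n : nat, (N <= n)%nat ->
       A_I alpha (Nat.iter n (G alpha) p))
  /\
  (forall mu : (R * R -> Prop) -> R,
     borel_prob_on_square mu -> G_invariant alpha mu ->
     mu (fun p => p = (0, 0)) = 0 ->
     mu (A_I alpha) = 1).
Proof.
  split.
  - intros p Hsq Hne. apply part1; auto.
  - intros mu Hmu Hinv H0. apply (part2 alpha Ha mu Hmu Hinv H0).
Qed.
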